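(* $\beta_2\geqslant\sqrt{7}$. More precisely, there exists a set $P$ of $19$ points in the Euclidean plane such that the largest edge-length of a bottleneck spanning tree of $P$ equals $1$, while every Hamiltonian path on $P$ (i.e., every spanning tree of $P$ of maximum degree at most $2$) has an edge of length at least $\sqrt{7}$.
   Context: For a finite point set $P$ in the plane, consider the complete graph on $P$ with edge weights equal to Euclidean distances. A bottleneck spanning tree (BST) of $P$ is a spanning tree minimizing the largest edge-length. For an integer $K\geqslant 2$, a bottleneck degree-$K$ spanning tree is a spanning tree of maximum degree at most $K$ minimizing the largest edge-length. $\beta_K$ denotes the supremum, over all finite point sets in the Euclidean plane, of the ratio of the largest edge-length of a bottleneck degree-$K$ spanning tree to the largest edge-length of a BST. *)

(* Defs.v *)
From Stdlib Require Import Reals.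
From mathcomp Require Import all_boot.

Set Implicit Arguments.
Unset Strict Implicit.
Unset Printing Implicit Defensive.

Definition pt : Type := (R * R)%type.

Definition eucl_dist (p q : pt) : R :=
  sqrt (Rplus (Rmult (Rminus (fst p) (fst q)) (Rminus (fst p) (fst q)))
              (Rmult (Rminus (snd p) (snd q)) (Rminus (snd p) (snd q)))).

(* A graph on the vertex set 'I_n is a set of undirected edges, each edge
   being a 2-element subset of 'I_n. *)
Definition adj n (E : {set {set 'I_n}}) : rel 'I_n :=
  fun u v => [set u; v] \in E.

Definition deg n (E : {set {set 'I_n}}) (v : 'I_n) : nat :=
  #|[set e in E | v \in e]|.

Definition spanning_tree n (E : {set {set 'I_n}}) : Prop :=
  [/\ (forall e, e \in E -> #|e| = 2),
      #|E| = n.-1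
    & forall u v : 'I_n, connect (adj E) u v].

Definition max_edge_len n (P : 'I_n -> pt) (E : {set {set 'I_n}}) : R :=
  \big[Rmax/R0]_(u <- enum 'I_n)
     \big[Rmax/R0]_(v <- enum 'I_n | adj E u v) eucl_dist (P u) (P v).

Definition is_BST n (P : 'I_n -> pt) (E : {set {set 'I_n}}) : Prop :=
  spanning_tree E /\
  forall E' : {set {set 'I_n}}, spanning_tree E' -> Rle (max_edge_len P E) (max_edge_len P E').

(* Main.v *)
Require Import Defs.
From Stdlib Require Import Reals Lra ZArith Classical.
From mathcomp Require Import all_boot zify.

Set Implicit Arguments.
Unset Strict Implicit.
Unset Printing Implicit Defensive.

Definition lA : seq Z := [:: 0;1;2;2;2;3;4; -1;-2;-3;-4;-2;-2; 0;0;1;2;-1;-2]%Z.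
Definition lB : seq Z := [:: 0;0;0;1;2;-1;-2; 1;2;2;2;3;4; -1;-2;-3;-4;-2;-2]%Z.
Definition ca (k : nat) : Z := nth 0%Z lA k.
Definition cb (k : nat) : Z := nth 0%Z lB k.
Definition Dz (i j : nat) : Z :=
  let a := (ca i - ca j)%Z in let b := (cb i - cb j)%Z in (a*a + a*b + b*b)%Z.
Section RealPart.
Local Open Scope R_scope.
Definition Pn (k : nat) : pt :=
  (IZR (ca k) + IZR (cb k) / 2, IZR (cb k) * sqrt 3 / 2).
Definition P19 (i : 'I_19) : pt := Pn (val i).

Lemma distE i j : eucl_dist (Pn i) (Pn j) = sqrt (IZR (Dz i j)).
Proof.
rewrite /eucl_dist /Pn /Dz /=; f_equal.
have H3 : (sqrt 3 * sqrt 3 = 3) by apply: sqrt_sqrt; lra.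
rewrite !plus_IZR !mult_IZR !minus_IZR.
set s := sqrt 3 in H3 *.
set a := IZR (ca i); set b := IZR (cb i); set a' := IZR (ca j); set b' := IZR (cb j).
match goal with |- ?L = ?Rh =>
  have E : (L - Rh = (s*s - 3) * ((b - b')*(b-b')/4)) by field end.
rewrite H3 in E. lra.
Qed.
End RealPart.
Section Comb.
Variable n : nat.
Variable E : {set {set 'I_n}}.
Hypothesis Hsz : forall e, e \in E -> #|e| = 2.

Lemma adj_sym u v : adj E u v = adj E v u.
Proof. by rewrite /adj setUC. Qed.

Lemma adj_irr u : ~~ adj E u u.
Proof.
apply/negP => H; have := Hsz H; by rewrite setUid cards1.
Qed.

Definition Nb v := [set z | adj E v z].

Lemma deg_Nb v : deg E v = #|Nb v|.
Proof.
rewrite /deg.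
have -> : [set e in E | v \in e] = [set [set v; z] | z in Nb v].
  apply/setP => e; rewrite !inE; apply/andP/imsetP.
  - move=> [He Hv]; have /cards2P [a [b [Hab De]]] : #|e| == 2 by rewrite Hsz.
    have: v \in [set a; b] by rewrite -De.
    rewrite !inE => /orP [/eqP ->|/eqP ->].
    + by exists b; rewrite // inE /adj -De.
    + exists a; last by rewrite De setUC.
      by rewrite inE /adj setUC -De.
  - move=> [z Hz ->]; rewrite inE in Hz; split => //; by rewrite !inE eqxx.
apply: card_in_imset => z1 z2; rewrite !inE => H1 H2 Heq.
have : z1 \in [set v; z2] by rewrite -Heq !inE eqxx orbT.
rewrite !inE => /orP [/eqP E1|/eqP //].
by move: H1; rewrite E1 (negbTE (adj_irr v)).
Qed.


Lemma handshake : \sum_(v : 'I_n) deg E v = 2 * #|E|.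
Proof.
have H1 v : deg E v = \sum_(e in E) (v \in e : nat).
  rewrite /deg -sum1_card big_mkcond /= [RHS]big_mkcond /=.
  apply: eq_bigr => e _; rewrite !inE; by case: (e \in E); case: (v \in e).
under eq_bigr do rewrite H1.
rewrite exchange_big /= mulnC -sum_nat_const.
apply: eq_bigr => e He; rewrite -(Hsz He) -sum1_card [RHS]big_mkcond /=.
by apply: eq_bigr => v _; case: (v \in e).
Qed.

Lemma forced (v a b : 'I_n) : #|Nb v| = 2 -> (forall z, adj E v z -> z = a \/ z = b) ->
  adj E v a /\ adj E v b.
Proof.
move=> Hc Hz.
have Hs : Nb v \subset [set a; b].
  apply/subsetP => z; rewrite inE => /Hz [->|->]; by rewrite !inE eqxx ?orbT.
have : Nb v == [set a; b].
  rewrite eqEcard Hs Hc /= cards2; by case: (a != b).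
move/eqP => HN.
have : a \in Nb v by rewrite HN !inE eqxx.
have : b \in Nb v by rewrite HN !inE eqxx orbT.
by rewrite !inE => -> ->.
Qed.

Lemma saturated (v a b : 'I_n) : #|Nb v| <= 2 -> a != b -> adj E v a -> adj E v b ->
  forall z, adj E v z -> z = a \/ z = b.
Proof.
move=> Hc Hab Ha Hb z Hz.
have Hs : [set a; b] \subset Nb v.
  apply/subsetP => w; rewrite !inE => /orP [/eqP ->|/eqP ->] //.
have : [set a; b] == Nb v by rewrite eqEcard Hs cards2 Hab.
move/eqP => HN.
have : z \in [set a; b] by rewrite HN inE.
by rewrite !inE => /orP [/eqP ->|/eqP ->]; [left|right].
Qed.

Lemma closed_set (C : {set 'I_n}) u v :
  (forall w z, w \in C -> adj E w z -> z \in C) -> connect (adj E) u v -> u \in C -> v \in C.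
Proof.
move=> HC Hc Hu.
have Hcl : closed (adj E) (mem C).
  move=> x y Hxy; apply/idP/idP => H.
  - exact: HC H Hxy.
  - by apply: HC H _; rewrite adj_sym.
by rewrite -(closed_connect Hcl Hc).
Qed.


Ltac inC := rewrite ?inE eqxx ?orbT.

Lemma gadget (x m t mm tt y r : 'I_n) :
  (forall u v, connect (adj E) u v) ->
  (forall v, #|Nb v| <= 2) ->
  uniq [:: x; m; t; mm; tt; y; r] ->
  (forall z, adj E t z -> z = x \/ z = m) ->
  (forall z, adj E tt z -> z = x \/ z = mm) ->
  (forall z, adj E m z -> [\/ z = y, z = x, z = t | z = mm]) ->
  (forall z, adj E mm z -> [\/ z = y, z = x, z = m | z = tt]) ->
  [\/ #|Nb m| <= 1, #|Nb t| <= 1, #|Nb mm| <= 1 | #|Nb tt| <= 1].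
Proof.
move=> Hconn Hdeg Hu Ct Ctt Cm Cmm.
move: Hu; rewrite /= !inE !negb_or -!andbA.
move=> /and5P[xm xt xmm xtt /and5P[xy xr mt mmm /and5P[mtt my mr tmm /and5P[ttt ty tr mmtt /and5P[mmy mmr tty ttr /andP[yr _]]]]]].
have two v : #|Nb v| <= 1 = false -> #|Nb v| = 2.
  move=> H; apply/eqP; rewrite eqn_leq Hdeg; by rewrite leqNgt ltnS H.
case Em: (#|Nb m| <= 1); first by constructor 1.
case Et: (#|Nb t| <= 1); first by constructor 2.
case Emm: (#|Nb mm| <= 1); first by constructor 3.
case Ett: (#|Nb tt| <= 1); first by constructor 4.
exfalso.
move/two: Em => Em; move/two: Et => Et; move/two: Emm => Emm; move/two: Ett => Ett.
have [Htx Htm] := forced Et Ct.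
have [Httx Httmm] := forced Ett Ctt.
have Sx := saturated (Hdeg x) ttt (etrans (adj_sym _ _) Htx) (etrans (adj_sym _ _) Httx).
have nmx : ~~ adj E m x.
  apply/negP; rewrite adj_sym => /Sx [] /eqP; by rewrite ?(negbTE mt) ?(negbTE mtt).
have Hmt : adj E m t by rewrite adj_sym.
have Hmmtt : adj E mm tt by rewrite adj_sym.
case: (boolP (adj E m mm)) => Hmmm.
- have Sm := saturated (Hdeg m) tmm Hmt Hmmm.
  have ttm : tt != m by rewrite eq_sym.
  have Smm := saturated (Hdeg mm) ttm Hmmtt (etrans (adj_sym _ _) Hmmm).
  have : r \in [set x; m; t; mm; tt].
    apply: (closed_set (u := x)) => //; last by inC.
    move=> w z; rewrite !inE => /orP[/orP[/orP[/orP[/eqP->|/eqP->]|/eqP->]|/eqP->]|/eqP->].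
    + by move/Sx => [->|->]; inC.
    + by move/Sm => [->|->]; inC.
    + by move/Ct => [->|->]; inC.
    + by move/Smm => [->|->]; inC.
    + by move/Ctt => [->|->]; inC.
  rewrite !inE; apply/negP.
  by rewrite ![r == _]eq_sym (negbTE xr) (negbTE mr) (negbTE tr) (negbTE mmr) (negbTE ttr).
- have [Hmy _] : adj E m y /\ adj E m t.
    apply: forced Em _ => z Hz; case: (Cm z Hz) => Ez; rewrite Ez in Hz *; [by left| |by right|].
    + by move: Hz; rewrite (negbTE nmx).
    + by move: Hz; rewrite (negbTE Hmmm).
  have nmmx : ~~ adj E mm x.
    apply/negP; rewrite adj_sym => /Sx [] /eqP; [by rewrite eq_sym (negbTE tmm) | by rewrite (negbTE mmtt)].
  have [Hmmy _] : adj E mm y /\ adj E mm tt.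
    apply: forced Emm _ => z Hz; case: (Cmm z Hz) => Ez; rewrite Ez in Hz *; [by left| | |by right].
    + by move: Hz; rewrite (negbTE nmmx).
    + by move: Hz; rewrite adj_sym (negbTE Hmmm).
  have yt : y != t by rewrite eq_sym.
  have Sm := saturated (Hdeg m) yt Hmy Hmt.
  have ytt : y != tt by rewrite eq_sym.
  have Smm := saturated (Hdeg mm) ytt Hmmy Hmmtt.
  have Sy := saturated (Hdeg y) mmm (etrans (adj_sym _ _) Hmy) (etrans (adj_sym _ _) Hmmy).
  have : r \in [set x; m; t; mm; tt; y].
    apply: (closed_set (u := x)) => //; last by inC.
    move=> w z; rewrite !inE => /orP[/orP[/orP[/orP[/orP[/eqP->|/eqP->]|/eqP->]|/eqP->]|/eqP->]|/eqP->].
    + by move/Sx => [->|->]; inC.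
    + by move/Sm => [->|->]; inC.
    + by move/Ct => [->|->]; inC.
    + by move/Smm => [->|->]; inC.
    + by move/Ctt => [->|->]; inC.
    + by move/Sy => [->|->]; inC.
  rewrite !inE; apply/negP.
  by rewrite ![r == _]eq_sym (negbTE xr) (negbTE mr) (negbTE tr) (negbTE mmr) (negbTE ttr) (negbTE yr).
Qed.

Lemma three_def a b c : #|E| = n.-1 -> (forall v, deg E v <= 2) ->
  a != b -> a != c -> b != c -> deg E a <= 1 -> deg E b <= 1 -> deg E c <= 1 -> 0 < n -> False.
Proof.
move=> HE Hd ab ac bc da db dc n0.
set S := [set a; b; c].
have : \sum_(v : 'I_n) (deg E v + (v \in S)) <= \sum_(v : 'I_n) 2.
  apply: leq_sum => v _; case: (boolP (v \in S)) => Hv; last by rewrite addn0 Hd.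
  move: Hv; rewrite !inE => /orP[/orP[/eqP->|/eqP->]|/eqP->]; by rewrite addn1 ltnS.
rewrite big_split /= handshake sum_nat_const card_ord HE.
have -> : \sum_(v : 'I_n) (v \in S : nat) = #|S|.
  by rewrite -sum1_card [RHS]big_mkcond.
have -> : #|S| = 3.
  by rewrite /S setUC cardsU1 cards2 ab !inE ![c == _]eq_sym (negbTE ac) (negbTE bc).
clear -n0; case: n n0 => // k _ /=.
lia.
Qed.

End Comb.

Definition parL : seq nat := [:: 0;0;1;2;3;2;5; 0;7;8;9;8;11; 0;13;14;15;14;17].
Definition depL : seq nat := [:: 0;1;2;3;4;3;4; 1;2;3;4;3;4; 1;2;3;4;3;4].
Definition o (k : nat) : 'I_19 := inord k.
Definition par (v : 'I_19) : 'I_19 := o (nth 0 parL v).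
Definition dep (v : 'I_19) : nat := nth 0 depL v.

Lemma all19 (Q : nat -> bool) : all Q (iota 0 19) -> forall i : 'I_19, Q i.
Proof. move=> H i; apply: (allP H); by rewrite mem_iota ltn_ord. Qed.

Lemma oK k : k < 19 -> val (o k) = k.
Proof. move=> h; exact: inordK. Qed.

Lemma par_props (v : 'I_19) : v != o 0 -> dep (par v) < dep v /\ Dz v (par v) = 1%Z.
Proof.
have H : all (fun k => (k == 0) || ((nth 0 parL k < 19) && (nth 0 depL (nth 0 parL k) < nth 0 depL k) && Z.eqb (Dz k (nth 0 parL k)) 1%Z)) (iota 0 19) by [].
move=> hv; have := all19 H v.
have -> : (val v == 0) = false.
  apply/negP => /eqP h; move/eqP: hv; apply; apply: val_inj; by rewrite oK.
move=> /= /andP[/andP[h1 h2] /Z.eqb_spec h3]; rewrite /dep /par oK //.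
Qed.

Lemma par_neq v : v != o 0 -> v != par v.
Proof.
move=> hv; have [d _] := par_props hv; apply/eqP => h.
by move: d; rewrite -h ltnn.
Qed.

Definition E0 : {set {set 'I_19}} := [set [set v; par v] | v in [set~ o 0]].

Lemma card_E0 : #|E0| = 18.
Proof.
rewrite card_in_imset ?cardsC1 ?card_ord //.
move=> v w; rewrite !inE => hv hw heq.
have h1 : v \in [set w; par w] by rewrite -heq !inE eqxx.
have h2 : w \in [set v; par v] by rewrite heq !inE eqxx.
move: h1 h2; rewrite !inE => /orP[/eqP //|/eqP e1] /orP[/eqP e2|/eqP e2]; first by rewrite e2.
have [d1 _] := par_props hv; have [d2 _] := par_props hw.
rewrite -e2 in d1; rewrite -e1 in d2.
by move: (ltn_trans d1 d2); rewrite ltnn.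
Qed.

Lemma sz_E0 e : e \in E0 -> #|e| = 2.
Proof. move=> /imsetP [v]; rewrite !inE => hv ->; by rewrite cards2 (par_neq hv). Qed.

Lemma adj_E0_par v : v != o 0 -> adj E0 v (par v).
Proof. move=> hv; rewrite /adj; apply: imset_f; by rewrite !inE. Qed.

Lemma conn0 v : connect (adj E0) v (o 0).
Proof.
move: {2}(dep v) (leqnn (dep v)) => k; elim: k v => [|k IH] v hk.
- case: (eqVneq v (o 0)) => [->|hv]; first exact: connect0.
  have [d _] := par_props hv; by move: (leq_trans d hk).
- case: (eqVneq v (o 0)) => [->|hv]; first exact: connect0.
  apply: connect_trans (connect1 (adj_E0_par hv)) (IH _ _).
  have [d _] := par_props hv; by rewrite -ltnS (leq_trans d hk).
Qed.

Lemma conn_E0 u v : connect (adj E0) u v.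
Proof.
have hs : connect_sym (adj E0) by apply: sym_connect_sym => a b; exact: adj_sym.
apply: connect_trans (conn0 u) _; by rewrite hs conn0.
Qed.

Lemma st_E0 : spanning_tree E0.
Proof. split; [exact: sz_E0 | exact: card_E0 | exact: conn_E0]. Qed.

Lemma Dz_sym i j : Dz i j = Dz j i.
Proof. rewrite /Dz; ring. Qed.

Lemma Dz_refl i : Dz i i = 0%Z.
Proof. unfold Dz; cbv zeta; rewrite !Z.sub_diag; reflexivity. Qed.

Lemma Dz_pos (i j : 'I_19) : i != j -> (1 <= Dz i j)%Z.
Proof.
move=> hij.
have H : all (fun k => all (fun l => (k == l) || Z.leb 1%Z (Dz k l)) (iota 0 19)) (iota 0 19) by [].
have := allP (all19 H i) j; rewrite mem_iota ltn_ord => /(_ isT) /orP [/eqP h|/Z.leb_spec0 //].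
by move/eqP: hij; case; apply: val_inj.
Qed.

Section RealPart2.
Local Open Scope R_scope.

Lemma bigmax_le (I : Type) (r : seq I) (Pr : pred I) (F : I -> R) c :
  0 <= c -> (forall i, Pr i -> F i <= c) -> \big[Rmax/R0]_(i <- r | Pr i) F i <= c.
Proof.
move=> h0 hF; apply: (big_ind (fun x => x <= c)) => //.
move=> x y hx hy; exact: Rmax_lub.
Qed.

Lemma bigmax_ge (I : eqType) (r : seq I) (Pr : pred I) (F : I -> R) i :
  i \in r -> Pr i -> F i <= \big[Rmax/R0]_(j <- r | Pr j) F j.
Proof.
elim: r => // a r IH; rewrite inE big_cons => /orP[/eqP <-|Hi] Hp.
- rewrite Hp; apply: Rmax_l.
- case: (Pr a); last exact: IH.
  apply: Rle_trans (IH Hi Hp) (Rmax_r _ _).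
Qed.

Lemma dist19 (u v : 'I_19) : eucl_dist (P19 u) (P19 v) = sqrt (IZR (Dz u v)).
Proof. by rewrite /P19 distE. Qed.

Lemma mel_E0 : max_edge_len P19 E0 = 1.
Proof.
apply: Rle_antisym.
- apply: bigmax_le; first lra; move=> u _.
  apply: bigmax_le; first lra; move=> v huv.
  rewrite dist19 -sqrt_1; apply: sqrt_le_1_alt; apply: IZR_le.
  move: huv; rewrite /adj => /imsetP [w]; rewrite !inE => hw heq.
  have [_ hD] := par_props hw.
  have h1 : u \in [set w; par w] by rewrite -heq !inE eqxx.
  have h2 : v \in [set w; par w] by rewrite -heq !inE eqxx orbT.
  move: h1 h2; rewrite !inE => /orP[/eqP ->|/eqP ->] /orP[/eqP ->|/eqP ->];
    rewrite ?Dz_refl ?hD // Dz_sym hD; lia.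
- have h01 : o 1 != o 0 by apply/eqP => h; have := congr1 val h; rewrite !oK.
  have h1 := adj_E0_par h01.
  have e1 : eucl_dist (P19 (o 1)) (P19 (par (o 1))) = 1.
    by rewrite dist19; have [_ ->] := par_props h01; rewrite sqrt_1.
  rewrite -e1.
  apply: (Rle_trans _ (\big[Rmax/R0]_(v <- enum 'I_19 | adj E0 (o 1) v) eucl_dist (P19 (o 1)) (P19 v))).
  + apply: bigmax_ge => //; by rewrite mem_enum.
  + apply: (@bigmax_ge _ _ _ (fun u => \big[Rmax/R0]_(v <- enum 'I_19 | adj E0 u v) eucl_dist (P19 u) (P19 v))) => //.
    by rewrite mem_enum.
Qed.

Lemma mel_ge1 E' : spanning_tree E' -> 1 <= max_edge_len P19 E'.
Proof.
case=> hsz hc _.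
have : E' != set0 by rewrite -card_gt0 hc.
case/set0Pn => e he.
have /cards2P [a [b [hab he']]] : #|e| == 2%N by rewrite hsz.
have hadj : adj E' a b by rewrite /adj -he'.
apply: (Rle_trans _ (\big[Rmax/R0]_(v <- enum 'I_19 | adj E' a v) eucl_dist (P19 a) (P19 v))).
- apply: (Rle_trans _ (eucl_dist (P19 a) (P19 b))).
  + rewrite dist19 -sqrt_1; apply: sqrt_le_1_alt; apply: IZR_le; exact: Dz_pos.
  + apply: bigmax_ge => //; by rewrite mem_enum.
- apply: (@bigmax_ge _ _ _ (fun u => \big[Rmax/R0]_(v <- enum 'I_19 | adj E' u v) eucl_dist (P19 u) (P19 v))) => //.
  by rewrite mem_enum.
Qed.

Lemma injP : injective P19.
Proof.
move=> i j Heq; case: (eqVneq i j) => // hij; exfalso.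
have e0 : forall p : pt, eucl_dist p p = 0.
  move=> [a b]; rewrite /eucl_dist /=.
  rewrite (_ : (a - a) * (a - a) + (b - b) * (b - b) = 0); [exact: sqrt_0|ring].
have h := e0 (P19 i); rewrite {2}Heq dist19 in h.
have hp := Dz_pos hij.
apply sqrt_eq_0 in h; last by apply: IZR_le; lia.
apply eq_IZR in h; lia.
Qed.

End RealPart2.

Lemma c2 (E : {set {set 'I_19}}) (w a b : nat) :
  (forall u v : 'I_19, adj E u v -> (Dz u v < 7)%Z) ->
  (forall e, e \in E -> #|e| = 2) ->
  all (fun k => Z.ltb (Dz w k) 7%Z ==> [|| k == w, k == a | k == b]) (iota 0 19) ->
  w < 19 -> a < 19 -> b < 19 ->
  forall z, adj E (o w) z -> z = o a \/ z = o b.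
Proof.
move=> HG hsz H hw ha hb z hadj; move: (HG _ _ hadj); rewrite oK // => hz.
have := all19 H z; move/implyP; move/(_ (introT (Z.ltb_spec0 _ _) hz)).
move=> /or3P[/eqP h|/eqP h|/eqP h]; [|left|right]; try (apply: val_inj; by rewrite oK).
have hz' : z = o w by apply: val_inj; rewrite oK.
by move: hadj; rewrite hz' (negbTE (adj_irr hsz _)).
Qed.

Lemma c4 (E : {set {set 'I_19}}) (w a b c d : nat) :
  (forall u v : 'I_19, adj E u v -> (Dz u v < 7)%Z) ->
  (forall e, e \in E -> #|e| = 2) ->
  all (fun k => Z.ltb (Dz w k) 7%Z ==> [|| k == w, k == a, k == b, k == c | k == d]) (iota 0 19) ->
  w < 19 -> a < 19 -> b < 19 -> c < 19 -> d < 19 ->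
  forall z, adj E (o w) z -> [\/ z = o a, z = o b, z = o c | z = o d].
Proof.
move=> HG hsz H hw ha hb hc hd z hadj; move: (HG _ _ hadj); rewrite oK // => hz.
have := all19 H z; move/implyP; move/(_ (introT (Z.ltb_spec0 _ _) hz)).
move=> /orP[/eqP h|/or4P[/eqP h|/eqP h|/eqP h|/eqP h]];
  [|constructor 1|constructor 2|constructor 3|constructor 4]; try (apply: val_inj; by rewrite oK).
have hz' : z = o w by apply: val_inj; rewrite oK.
by move: hadj; rewrite hz' (negbTE (adj_irr hsz _)).
Qed.

Lemma gadget19 (E : {set {set 'I_19}}) (b : nat) :
  (forall e, e \in E -> #|e| = 2) ->
  (forall u v, connect (adj E) u v) ->
  (forall v, deg E v <= 2) ->
  (forall u v : 'I_19, adj E u v -> (Dz u v < 7)%Z) ->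
  b \in [:: 1; 7; 13] ->
  exists d : 'I_19, (b + 2 <= d <= b + 5) /\ deg E d <= 1.
Proof.
move=> hsz hconn hdeg HG hb.
have hdegN v : #|Nb E v| <= 2 by rewrite -(deg_Nb hsz).
have hb5 : b + 5 < 19 by move: hb; rewrite !inE => /orP[/eqP->|/orP[/eqP->|/eqP->]].
have G := @gadget 19 E (o (b+1)) (o (b+2)) (o (b+3)) (o (b+4)) (o (b+5)) (o b) (o 0) hconn hdegN.
have hu : uniq [:: o (b+1); o (b+2); o (b+3); o (b+4); o (b+5); o b; o 0].
  rewrite -(map_inj_uniq val_inj) /= !oK; try lia.
  by move: hb; rewrite !inE => /orP[/eqP->|/orP[/eqP->|/eqP->]].
have K1 : all (fun b => all (fun k => Z.ltb (Dz (b+3) k) 7%Z ==> [|| k == b+3, k == b+1 | k == b+2]) (iota 0 19)) [:: 1; 7; 13] by [].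
have K2 : all (fun b => all (fun k => Z.ltb (Dz (b+5) k) 7%Z ==> [|| k == b+5, k == b+1 | k == b+4]) (iota 0 19)) [:: 1; 7; 13] by [].
have K3 : all (fun b => all (fun k => Z.ltb (Dz (b+2) k) 7%Z ==> [|| k == b+2, k == b, k == b+1, k == b+3 | k == b+4]) (iota 0 19)) [:: 1; 7; 13] by [].
have K4 : all (fun b => all (fun k => Z.ltb (Dz (b+4) k) 7%Z ==> [|| k == b+4, k == b, k == b+1, k == b+2 | k == b+5]) (iota 0 19)) [:: 1; 7; 13] by [].
have ct : forall z, adj E (o (b+3)) z -> z = o (b+1) \/ z = o (b+2).
  apply: c2 => //; try lia. exact: (allP K1 b hb).
have ctt : forall z, adj E (o (b+5)) z -> z = o (b+1) \/ z = o (b+4).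
  apply: c2 => //; try lia. exact: (allP K2 b hb).
have cm : forall z, adj E (o (b+2)) z -> [\/ z = o b, z = o (b+1), z = o (b+3) | z = o (b+4)].
  apply: c4 => //; try lia. exact: (allP K3 b hb).
have cmm : forall z, adj E (o (b+4)) z -> [\/ z = o b, z = o (b+1), z = o (b+2) | z = o (b+5)].
  apply: c4 => //; try lia. exact: (allP K4 b hb).
case: (G hu ct ctt cm cmm) => h.
- exists (o (b+2)); rewrite (deg_Nb hsz) oK; last lia; split => //; lia.
- exists (o (b+3)); rewrite (deg_Nb hsz) oK; last lia; split => //; lia.
- exists (o (b+4)); rewrite (deg_Nb hsz) oK; last lia; split => //; lia.
- exists (o (b+5)); rewrite (deg_Nb hsz) oK; last lia; split => //; lia.
Qed.

Theorem mainTheorem3 :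
  exists P : 'I_19 -> pt,
    injective P /\
    (exists E, is_BST P E /\ max_edge_len P E = R1) /\
    (forall E : {set {set 'I_19}},
        spanning_tree E -> (forall v, deg E v <= 2) ->
        exists u v, adj E u v /\ Rle (sqrt (INR 7)) (eucl_dist (P u) (P v))).
Proof.
exists P19; split; first exact: injP.
split.
- exists E0; split; last exact: mel_E0.
  split; first exact: st_E0.
  move=> E' hE'; rewrite mel_E0; exact: mel_ge1.
- move=> E hst hdeg.
  case: (classic (exists u v, adj E u v /\ Rle (sqrt (INR 7)) (eucl_dist (P19 u) (P19 v)))) => // hno.
  exfalso.
  have HG : forall u v : 'I_19, adj E u v -> (Dz u v < 7)%Z.
    move=> u v huv; case: (Z_lt_le_dec (Dz u v) 7) => // h7; exfalso; apply: hno.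
    exists u, v; split => //; rewrite dist19; apply: sqrt_le_1_alt.
    rewrite INR_IZR_INZ; apply: IZR_le; exact: h7.
  case: hst => hsz hcard hconn.
  have [d0 [r0 e0]] := gadget19 hsz hconn hdeg HG (isT : 1 \in [:: 1; 7; 13]).
  have [d1 [r1 e1]] := gadget19 hsz hconn hdeg HG (isT : 7 \in [:: 1; 7; 13]).
  have [d2 [r2 e2]] := gadget19 hsz hconn hdeg HG (isT : 13 \in [:: 1; 7; 13]).
  apply: (three_def hsz (a := d0) (b := d1) (c := d2) hcard hdeg) => //.
  + apply/eqP => h; rewrite h in r0; lia.
  + apply/eqP => h; rewrite h in r0; lia.
  + apply/eqP => h; rewrite h in r1; lia.
Qed.
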